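(* Let $M=(S,\mathrm{Act},P)$ be an MDP, $T\subseteq S$, $\mathrm{opt}\in\{\min,\max\}$, $r$ the least fixed point of $\tilde D^{\mathrm{opt}}$, $Z=\{s\in S\mid\Pr^{\mathrm{opt}}_s(\Diamond T)=0\}$, and $\sigma$ a strategy with $\Pr^\sigma_s(\Diamond T)=\Pr^{\mathrm{opt}}_s(\Diamond T)$ for all $s\in S$. For $s\in S$ let $z(s)$ be the probability, in the Markov chain induced by $\sigma$ started at $s$, of the set of paths $s_0s_1\ldots$ for which there is $i$ with $s_i\in Z$ and $s_j\notin T$ for all $j<i$. Then for all $s\in S$: $z(s)>0$ implies $r(s)<\infty$.
   Context: An MDP is a tuple $M=(S,\mathrm{Act},P)$ with $S$ finite, $\mathrm{Act}$ finite, $P\colon S\times\mathrm{Act}\times S\to[0,1]$ with $\sum_{s'}P(s,a,s')\in\{0,1\}$; $\mathrm{Act}(s)=\{a\mid\sum_{s'}P(s,a,s')=1\}$ is nonempty for all $s$; $\mathrm{Post}(s,a)=\{s'\mid P(s,a,s')>0\}$. A strategy is $\sigma\colon S\to\mathrm{Act}$ with $\sigma(s)\in\mathrm{Act}(s)$, inducing a Markov chain with transitions $P(s,\sigma(s),\cdot)$; $\Pr^\sigma_s(\Diamond T)$ is the probability of visiting $T$ from $s$ and $\Pr^{\mathrm{opt}}_s(\Diamond T)=\mathrm{opt}_\sigma\Pr^\sigma_s(\Diamond T)$. $\mathbb{N}_\infty=\mathbb{N}\cup\{\infty\}$ with $\infty+1=\infty$. $\tilde D^{\mathrm{opt}}(r)(s)=\infty$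 for $s\in T$ and $\mathrm{opt}_{a\in\mathrm{Act}(s)}\big(\min_{s'\in\mathrm{Post}(s,a)}r(s')+[\exists u,v\in\mathrm{Post}(s,a)\colon r(u)\ne r(v)]\big)$ for $s\notin T$ ($[\varphi]\in\{0,1\}$ the Iverson bracket); its least fixed point w.r.t. the pointwise order exists. *)

(* Defs.v *)
From HB Require Import structures.
From mathcomp Require Import all_boot all_order all_algebra.
From mathcomp Require Import classical_sets boolp reals.
Set Implicit Arguments. Unset Strict Implicit. Unset Printing Implicit Defensive.
Import Order.TTheory GRing.Theory Num.Theory.
Local Open Scope ring_scope.

(** Extended naturals N_oo = nat + {oo}; [None] is oo. *)
Definition ninf := option nat.
Definition ninf_le (x y : ninf) : bool :=
  match x, y with
  | _, None => true
  | None, Some _ => false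
  | Some m, Some n => (m <= n)%N
  end.
Definition ninf_add1 (x : ninf) (b : bool) : ninf :=
  match x with None => None | Some n => Some (n + b)%N end.
Definition ninf_min (x y : ninf) : ninf := if ninf_le x y then x else y.
Definition ninf_max (x y : ninf) : ninf := if ninf_le x y then y else x.

Inductive optT := Omin | Omax.

Section MDP.
Variables (R : realType) (S A : finType).
Variable P : S -> A -> S -> R.

Definition is_mdp : Prop :=
  [/\ (forall s a s', 0 <= P s a s' <= 1),
      (forall s a, \sum_(s' : S) P s a s' = 0 \/ \sum_(s' : S) P s a s' = 1)
    & (forall s, exists a, \sum_(s' : S) P s a s' = 1)].

Definition enabled (s : S) (a : A) : bool := \sum_(s' : S) P s a s' == 1.
Definition Post (s : S) (a : A) : seq S := [seq s' <- enum S | 0 < P s a s'].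

Definition strategy (sigma : S -> A) : Prop := forall s, enabled s (sigma s).

Fixpoint reachn (sigma : S -> A) (T : {set S}) (n : nat) (s : S) : R :=
  if s \in T then 1 else
  match n with
  | 0 => 0
  | n'.+1 => \sum_(s' : S) P s (sigma s) s' * reachn sigma T n' s'
  end.

(** Pr^sigma_s(<> T): measure of the increasing union of the events
    "T reached within n steps" *)
Definition PrReach (sigma : S -> A) (T : {set S}) (s : S) : R :=
  sup (range (fun n => reachn sigma T n s)).

Definition PrOpt (opt : optT) (T : {set S}) (s : S) : R :=
  let V := [set x : R | exists sigma, strategy sigma /\ x = PrReach sigma T s]%classic in
  match opt with Omin => inf V | Omax => sup V end.

(** probability, in the chain induced by sigma, of the paths that visit Z
    at some position i while avoiding T at all positions j < i; bounded version *)
Fixpoint untiln (sigma : S -> A) (T : {set S}) (Z : set S) (n : nat) (s : S) : R :=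
  if `[< Z s >] then 1 else
  if s \in T then 0 else
  match n with
  | 0 => 0
  | n'.+1 => \sum_(s' : S) P s (sigma s) s' * untiln sigma T Z n' s'
  end.

Definition PrUntil (sigma : S -> A) (T : {set S}) (Z : set S) (s : S) : R :=
  sup (range (fun n => untiln sigma T Z n s)).

Definition Dtilde (opt : optT) (T : {set S}) (r : S -> ninf) (s : S) : ninf :=
  if s \in T then None else
  let val_a a :=
    ninf_add1 (foldr ninf_min None [seq r s' | s' <- Post s a])
              [exists u, exists v, [&& 0 < P s a u, 0 < P s a v & r u != r v]] in
  let acts := [seq a <- enum A | enabled s a] in
  match opt with
  | Omin => foldr (fun a acc => ninf_min (val_a a) acc) None acts
  | Omax => foldr (fun a acc => ninf_max (val_a a) acc) (Some 0%N) acts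
  end.

Definition is_lfp (f : (S -> ninf) -> S -> ninf) (r : S -> ninf) : Prop :=
  (forall s, f r s = r s) /\
  (forall r', (forall s, f r' s = r' s) -> forall s, ninf_le (r s) (r' s)).

End MDP.

(* Main.v *)
Require Import Defs.
From HB Require Import structures.
From mathcomp Require Import all_boot all_order all_algebra.
From mathcomp Require Import classical_sets boolp reals.
From mathcomp Require Import zify.
Import Order.TTheory GRing.Theory Num.Theory.
Set Implicit Arguments. Unset Strict Implicit. Unset Printing Implicit Defensive.

Section PartA.

Lemma nle_refl x : ninf_le x x.
Proof. by case: x => //= n; rewrite leqnn. Qed.
Lemma nle_trans x y z : ninf_le x y -> ninf_le y z -> ninf_le x z.
Proof. case: x => [a|]; case: y => [b|]; case: z => [c|] //=; lia. Qed.
Lemma nle_anti x y : ninf_le x y -> ninf_le y x -> x = y.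
Proof. case: x => [a|]; case: y => [b|] //= h1 h2; congr Some; lia. Qed.
Lemma nle_None x : ninf_le x None.
Proof. by case: x. Qed.
Lemma nle_total x y : ninf_le x y || ninf_le y x.
Proof. case: x => [a|]; case: y => [b|] //=; lia. Qed.
Lemma nmin_mono a a' b b' : ninf_le a a' -> ninf_le b b' ->
  ninf_le (ninf_min a b) (ninf_min a' b').
Proof.
rewrite /ninf_min; case: a => [a|]; case: a' => [a'|]; case: b => [b|];
 case: b' => [b'|] //=; repeat case: ifP => //=; lia.
Qed.
Lemma nmax_mono a a' b b' : ninf_le a a' -> ninf_le b b' ->
  ninf_le (ninf_max a b) (ninf_max a' b').
Proof.
rewrite /ninf_max; case: a => [a|]; case: a' => [a'|]; case: b => [b|];
 case: b' => [b'|] //=; repeat case: ifP => //=; lia.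
Qed.
Lemma nmin_le_l a b : ninf_le (ninf_min a b) a.
Proof. rewrite /ninf_min; case: a => [a|]; case: b => [b|] //=; repeat case: ifP => //=; lia. Qed.
Lemma nmin_le_r a b : ninf_le (ninf_min a b) b.
Proof. rewrite /ninf_min; case: a => [a|]; case: b => [b|] //=; repeat case: ifP => //=; lia. Qed.
Lemma nmax_lub a b c : ninf_le a c -> ninf_le b c -> ninf_le (ninf_max a b) c.
Proof. by rewrite /ninf_max; case: ifP. Qed.

Lemma foldmin_le (T : eqType) (f : T -> ninf) (l : seq T) y :
  y \in l -> ninf_le (foldr (fun a acc => ninf_min (f a) acc) None l) (f y).
Proof.
elim: l => //= a l IH; rewrite in_cons => /orP [/eqP ->|/IH h].
  exact: nmin_le_l.
exact: nle_trans (nmin_le_r _ _) h.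
Qed.
Lemma foldmin_mono (T : Type) (f g : T -> ninf) (l : seq T) :
  (forall a, ninf_le (f a) (g a)) ->
  ninf_le (foldr (fun a acc => ninf_min (f a) acc) None l)
          (foldr (fun a acc => ninf_min (g a) acc) None l).
Proof. move=> h; elim: l => //= a l IH; exact: nmin_mono. Qed.
Lemma foldmax_mono (T : Type) (f g : T -> ninf) (l : seq T) z :
  (forall a, ninf_le (f a) (g a)) ->
  ninf_le (foldr (fun a acc => ninf_max (f a) acc) z l)
          (foldr (fun a acc => ninf_max (g a) acc) z l).
Proof. move=> h; elim: l => /= [|a l IH]; [exact: nle_refl| exact: nmax_mono]. Qed.

Lemma foldmax_lub (T : eqType) (f : T -> ninf) (l : seq T) z c :
  (forall a, a \in l -> ninf_le (f a) c) -> ninf_le z c ->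
  ninf_le (foldr (fun a acc => ninf_max (f a) acc) z l) c.
Proof.
elim: l => //= a l IH h hz; apply: nmax_lub; first by apply: h; rewrite mem_head.
by apply: IH => // b hb; apply: h; rewrite in_cons hb orbT.
Qed.

Lemma lmin_lb (T : eqType) (x : T -> ninf) (l : seq T) y :
  y \in l -> ninf_le (foldr ninf_min None [seq x s | s <- l]) (x y).
Proof.
elim: l => //= a l IH; rewrite in_cons => /orP [/eqP ->|/IH h].
  exact: nmin_le_l.
exact: nle_trans (nmin_le_r _ _) h.
Qed.
Lemma lmin_att (T : eqType) (x : T -> ninf) (l : seq T) :
  foldr ninf_min None [seq x s | s <- l] = None \/
  exists2 y, y \in l & foldr ninf_min None [seq x s | s <- l] = x y.
Proof.
elim: l => /= [|a l [->|[y yl ->]]]; first by left.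
  rewrite /ninf_min nle_None; right; exists a => //; exact: mem_head.
rewrite /ninf_min; case: ifP => _; right.
  by exists a => //; exact: mem_head.
by exists y => //; rewrite in_cons yl orbT.
Qed.

End PartA.

Section PartB.

Definition nmono (S : Type) (f : (S -> ninf) -> S -> ninf) :=
  forall r1 r2, (forall s, ninf_le (r1 s) (r2 s)) -> forall s, ninf_le (f r1 s) (f r2 s).
Definition npre (S : Type) (f : (S -> ninf) -> S -> ninf) (y : S -> ninf) :=
  forall s, ninf_le (f y s) (y s).

Lemma lfp_below_pre (S : Type) (f : (S -> ninf) -> S -> ninf) r y :
  nmono f -> (forall s, f r s = r s) /\
  (forall r', (forall s, f r' s = r' s) -> forall s, ninf_le (r s) (r' s)) ->
  npre f y -> forall s, ninf_le (r s) (y s).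
Proof.
move=> mono [_ lfp] pre.
pose Q s k := exists y, npre f y /\ y s = Some k.
pose m s := match pselect (exists k, `[< Q s k >]) with
  | left H => Some (ex_minn H) | right _ => None end.
have mle : forall y, npre f y -> forall s, ninf_le (m s) (y s).
  move=> y' py s; case ys: (y' s) => [k|]; last exact: nle_None.
  rewrite /m; case: pselect => [H|H]; last first.
    by exfalso; apply: H; exists k; apply/asboolP; exists y'.
  case: ex_minnP => n _ hn /=; apply: hn; apply/asboolP; by exists y'.
have mpre : npre f m.
  move=> s; case ms: (m s) => [k|]; last exact: nle_None.
  move: ms; rewrite /m; case: pselect => [H|//].
  case: ex_minnP => n /asboolP [y' [py ys]] _ [<-].
  rewrite -ys; apply: nle_trans (py s); exact: mono (mle _ py) s.
have fpre : npre f (f m) by move=> s; apply: mono mpre s.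
have fix_m : forall s, f m s = m s.
  by move=> s; apply: nle_anti; [exact: mpre | exact: mle fpre s].
move=> s; apply: nle_trans (lfp _ fix_m s) (mle _ pre s).
Qed.

End PartB.

Section PartC.
Local Open Scope ring_scope.

Lemma inPost (R : realType) (S A : finType) (P : S -> A -> S -> R) s a y :
  (y \in Post P s a) = (0 < P s a y).
Proof. by rewrite /Post mem_filter mem_enum andbT. Qed.

Lemma val_mono (R : realType) (S A : finType) (P : S -> A -> S -> R) r1 r2 s a :
  (forall u, ninf_le (r1 u) (r2 u)) ->
  ninf_le (ninf_add1 (foldr ninf_min None [seq r1 s' | s' <- Post P s a])
     [exists u, exists v, [&& 0 < P s a u, 0 < P s a v & r1 u != r1 v]])
   (ninf_add1 (foldr ninf_min None [seq r2 s' | s' <- Post P s a])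
     [exists u, exists v, [&& 0 < P s a u, 0 < P s a v & r2 u != r2 v]]).
Proof.
move=> le12.
case: (lmin_att r2 (Post P s a)) => [->|[y yin ->]]; first exact: nle_None.
have h1 := nle_trans (lmin_lb r1 yin) (le12 y).
case r2y: (r2 y) => [k2|]; last exact: nle_None.
move: h1; rewrite r2y.
case m1e: (foldr ninf_min None [seq r1 s' | s' <- Post P s a]) => [k1|] //= hk.
have [lt|eqk] : (k1 < k2)%N \/ k1 = k2 by lia.
  case: [exists _, _]; case: [exists _, _] => /=; lia.
subst k2.
case: existsP => /= [[u /existsP [v /and3P [pu pv ruv]]]|_]; last lia.
have [w [pw rw]] : exists w, 0 < P s a w /\ r1 w != Some k1.
  case: (eqVneq (r1 u) (Some k1)) => [e|ne]; last by exists u.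
  by exists v; split => //; rewrite -e eq_sym.
have := @lmin_lb _ r1 (Post P s a) w; rewrite inPost => /(_ pw).
rewrite m1e => hw.
have r2w : r2 w != Some k1.
  have := le12 w; move: hw rw; case: (r1 w) => [j|] /=; case: (r2 w) => [j'|] //=.
  move=> h1 h2 h3; apply/eqP => -[e]; move: h2 => /eqP; apply; congr Some; lia.
have -> : [exists u0, exists v0, [&& 0 < P s a u0, 0 < P s a v0 & r2 u0 != r2 v0]].
  apply/existsP; exists w; apply/existsP; exists y.
  by rewrite pw -inPost yin r2y r2w.
rewrite /=; lia.
Qed.

Lemma Dtilde_mono (R : realType) (S A : finType) (P : S -> A -> S -> R) opt T :
  nmono (Dtilde P opt T).
Proof.
move=> r1 r2 le12 s; rewrite /Dtilde; case: ifP => _; first exact: nle_refl.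
case: opt.
  apply: foldmin_mono => a; exact: val_mono.
apply: foldmax_mono => a; exact: val_mono.
Qed.

End PartC.

Section PartD.
Local Open Scope ring_scope.

Section Reach.
Context (R : realType) (S A : finType) (P : S -> A -> S -> R).
Hypothesis mdp : is_mdp P.
Implicit Types (T : {set S}) (s u : S) (tau : S -> A).

Lemma P_ge0 s a u : 0 <= P s a u.
Proof. by case: mdp => h _ _; case/andP: (h s a u). Qed.

Lemma sumP1 tau s : strategy P tau -> \sum_u P s (tau s) u = 1.
Proof. by move=> st; apply/eqP; exact: st. Qed.

Lemma reach_bnd tau T n s : strategy P tau ->
  0 <= reachn P tau T n s <= 1.
Proof.
move=> st; elim: n s => [|n IH] s /=; case: ifP => _ //=; rewrite ?lexx ?ler01 //.
apply/andP; split.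
  by apply: sumr_ge0 => u _; apply: mulr_ge0 => //; [exact: P_ge0|case/andP: (IH u)].
rewrite -(sumP1 s st); apply: ler_sum => u _.
rewrite -[leRHS]mulr1; apply: ler_wpM2l; first exact: P_ge0.
by case/andP: (IH u).
Qed.

Lemma reach_step tau T n s : strategy P tau ->
  reachn P tau T n s <= reachn P tau T n.+1 s.
Proof.
move=> st; elim: n s => [|n IH] s.
  rewrite /=; case: ifP => _ //.
  by apply: sumr_ge0 => u _; apply: mulr_ge0; [exact: P_ge0|case/andP: (reach_bnd T 0 u st)].
rewrite [reachn _ _ _ n.+1 _]/= [reachn _ _ _ n.+2 _]/=; case: ifP => _ //.
apply: ler_sum => u _; apply: ler_wpM2l; [exact: P_ge0|exact: IH].
Qed.

Lemma reach_le tau T m n s : strategy P tau -> (m <= n)%N ->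
  reachn P tau T m s <= reachn P tau T n s.
Proof.
move=> st /subnK <-; elim: (n - m)%N => [|k IH]; first by rewrite add0n.
by rewrite addSn; apply: le_trans IH (reach_step _ _ _ st).
Qed.

Lemma has_sup_reach tau T s : strategy P tau ->
  has_sup (range (fun n => reachn P tau T n s)).
Proof.
move=> st; split; first by exists (reachn P tau T 0 s); exact: imageT.
exists 1 => _ [n _ <-]; by case/andP: (reach_bnd T n s st).
Qed.

Lemma reach_le_Pr tau T n s : strategy P tau ->
  reachn P tau T n s <= PrReach P tau T s.
Proof. move=> st; apply: sup_upper_bound (has_sup_reach T s st) _ _; exact: imageT. Qed.

Lemma Pr_le1 tau T s : strategy P tau -> PrReach P tau T s <= 1.
Proof.
move=> st; apply: ge_sup; first by exists (reachn P tau T 0 s); exact: imageT.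
by move=> _ [n _ <-]; case/andP: (reach_bnd T n s st).
Qed.

Lemma Pr_ge0 tau T s : strategy P tau -> 0 <= PrReach P tau T s.
Proof.
move=> st; apply: le_trans (reach_le_Pr T 0 s st).
by case/andP: (reach_bnd T 0 s st).
Qed.

Lemma Pr_T tau T s : strategy P tau -> s \in T -> PrReach P tau T s = 1.
Proof.
move=> st sT; apply/le_anti; rewrite Pr_le1 //=.
by have := reach_le_Pr T 0 s st; rewrite /= sT.
Qed.

Lemma Pr_HD tau T s : strategy P tau -> s \notin T ->
  \sum_u P s (tau s) u * PrReach P tau T u <= PrReach P tau T s.
Proof.
move=> st sT; apply/ler_addgt0Pr => e e0.
have : forall u, exists n, PrReach P tau T u - e < reachn P tau T n u.
  move=> u; have [_ [n _ <-] h] := sup_adherent e0 (has_sup_reach T u st).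
  by exists n.
case/choice => nf hnf.
pose N := (\max_(u : S) nf u)%N.
have hN : forall u, PrReach P tau T u <= reachn P tau T N u + e.
  move=> u; rewrite -lerBlDr; apply/ltW; apply: lt_le_trans (hnf u) _.
  by apply: reach_le => //; exact: leq_bigmax.
apply: le_trans (lerD (reach_le_Pr T N.+1 s st) (lexx e)).
rewrite /= (negbTE sT).
apply: le_trans (_ : \sum_u P s (tau s) u * (reachn P tau T N u + e) <= _).
  by apply: ler_sum => u _; apply: ler_wpM2l; [exact: P_ge0|exact: hN].
rewrite le_eqVlt; apply/orP; left; apply/eqP.
rewrite (eq_bigr (fun u => P s (tau s) u * reachn P tau T N u + P s (tau s) u * e)).
  by rewrite big_split /= -mulr_suml sumP1 // mul1r.
by move=> u _; rewrite mulrDr.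
Qed.

End Reach.

End PartD.

Section PartE.
Local Open Scope ring_scope.

Section Main.
Context (R : realType) (S A : finType) (P : S -> A -> S -> R).
Hypothesis mdp : is_mdp P.
Implicit Types (T : {set S}) (s t u : S) (tau sig : S -> A).

Lemma sum_addc s a (f : S -> R) c : \sum_u P s a u = 1 ->
  \sum_u P s a u * (f u + c) = \sum_u P s a u * f u + c.
Proof.
move=> h; rewrite (eq_bigr (fun u => P s a u * f u + P s a u * c)).
  by rewrite big_split /= -mulr_suml h mul1r.
by move=> u _; rewrite mulrDr.
Qed.

Lemma reach_until sig T (Z : set S) m n s : strategy P sig ->
  (forall t, Z t -> PrReach P sig T t = 0) ->
  reachn P sig T n s + untiln P sig T Z m s <= 1.
Proof.
move=> st hZ; elim: m n s => [|m IH] n s /=.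
  case: asboolP => [zs|_].
    have -> : reachn P sig T n s = 0.
      apply/le_anti/andP; split; first by rewrite -(hZ s zs); exact: reach_le_Pr.
      by case/andP: (reach_bnd mdp T n s st).
    by rewrite add0r.
  by case: ifP => _; rewrite addr0; case/andP: (reach_bnd mdp T n s st).
case: asboolP => [zs|_].
  have -> : reachn P sig T n s = 0.
    apply/le_anti/andP; split; first by rewrite -(hZ s zs); exact: reach_le_Pr.
    by case/andP: (reach_bnd mdp T n s st).
  by rewrite add0r.
case: ifP => sT; first by rewrite addr0; case/andP: (reach_bnd mdp T n s st).
case: n => [|n] /=; rewrite sT.
  rewrite add0r -(sumP1 s st); apply: ler_sum => u _.
  rewrite -[leRHS]mulr1; apply: ler_wpM2l; first exact: (P_ge0 mdp).
  have := IH 0%N u; have := reach_bnd mdp T 0 u st; case/andP => h0 _ h1.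
  by apply: le_trans h1; rewrite lerDr.
rewrite -big_split /= -(sumP1 s st); apply: ler_sum => u _.
by rewrite -mulrDr -[leRHS]mulr1; apply: ler_wpM2l; [exact: (P_ge0 mdp)|exact: IH].
Qed.

Lemma Pr_until sig T (Z : set S) s : strategy P sig ->
  (forall t, Z t -> PrReach P sig T t = 0) ->
  PrUntil P sig T Z s <= 1 - PrReach P sig T s.
Proof.
move=> st hZ.
have h : forall m, untiln P sig T Z m s <= 1 - PrReach P sig T s.
  move=> m; rewrite lerBrDl addrC -lerBrDl.
  apply: ge_sup; first by exists (reachn P sig T 0 s); exact: imageT.
  by move=> _ [n _ <-]; rewrite lerBrDl addrC; exact: reach_until.
apply: ge_sup; first by exists (untiln P sig T Z 0 s); exact: imageT.
by move=> _ [n _ <-].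
Qed.

Lemma bellman sig T t a : strategy P sig ->
  (forall tau, strategy P tau -> PrReach P tau T t <= PrReach P sig T t) ->
  t \notin T -> enabled P t a ->
  \sum_u P t a u * PrReach P sig T u <= PrReach P sig T t.
Proof.
move=> st opt tT en.
pose tau u := if u == t then a else sig u.
have stt : strategy P tau by move=> u; rewrite /tau; case: eqP => [->|].
pose w := PrReach P tau T; pose v := PrReach P sig T.
pose d := v t - w t.
have d0 : 0 <= d by rewrite subr_ge0; exact: opt.
have claim : forall n u, reachn P sig T n u <= w u + d.
  elim=> [|n IH] u; case: (eqVneq u t) => [->|ne].
  - by apply: le_trans (reach_le_Pr mdp _ _ _ st) _; rewrite /d addrC subrK.
  - rewrite /=; case: ifP => uT; last by rewrite addr_ge0 // Pr_ge0.
    by rewrite /w Pr_T // lerDl.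
  - by apply: le_trans (reach_le_Pr mdp _ _ _ st) _; rewrite /d addrC subrK.
  - rewrite /=; case: ifP => uT; first by rewrite /w Pr_T // lerDl.
    have tu : tau u = sig u by rewrite /tau (negbTE ne).
    apply: le_trans (_ : \sum_u' P u (sig u) u' * (w u' + d) <= _).
      by apply: ler_sum => u' _; apply: ler_wpM2l; [exact: (P_ge0 mdp)|exact: IH].
    rewrite sum_addc ?(sumP1 u st) // lerD2r -tu.
    by apply: Pr_HD; rewrite ?uT.
have vw : forall u, v u <= w u + d.
  move=> u; apply: ge_sup; first by exists (reachn P sig T 0 u); exact: imageT.
  by move=> _ [n _ <-].
apply: le_trans (_ : \sum_u P t a u * (w u + d) <= _).
  by apply: ler_sum => u _; apply: ler_wpM2l; [exact: (P_ge0 mdp)|exact: vw].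
rewrite sum_addc; last exact/eqP.
have -> : PrReach P sig T t = w t + d by rewrite /d addrC subrK.
rewrite lerD2r.
have ta : tau t = a by rewrite /tau eqxx.
by rewrite -ta; apply: Pr_HD.
Qed.

End Main.

End PartE.

Section PartF.
Local Open Scope ring_scope.

Definition xrank (R : realType) (S : finType) (v : S -> R) (t : S) : ninf :=
  if v t == 1 then None else Some #|[set u | v u < v t]|.

Lemma key (R : realType) (S A : finType) (P : S -> A -> S -> R) (v : S -> R) t a :
  is_mdp P -> (forall u, v u <= 1) -> v t != 1 -> enabled P t a ->
  \sum_u P t a u * v u <= v t ->
  ninf_le (ninf_add1 (foldr ninf_min None [seq xrank v s' | s' <- Post P t a])
     [exists u, exists w, [&& 0 < P t a u, 0 < P t a w & xrank v u != xrank v w]])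
   (xrank v t).
Proof.
move=> mdp vle1 vt1 en hB.
have P0 : forall u, 0 <= P t a u by move=> u; case: mdp => h _ _; case/andP: (h t a u).
have sum1 : \sum_u P t a u = 1 by apply/eqP.
have xt : xrank v t = Some #|[set u | v u < v t]| by rewrite /xrank (negbTE vt1).
case: (pselect (exists u, 0 < P t a u /\ v u < v t)) => [[u1 [pu1 lt1]]|nB].
  have vu1 : v u1 != 1.
    by apply/eqP => e; move: lt1; rewrite e => /lt_le_trans /(_ (vle1 t)); rewrite ltxx.
  have xu1 : xrank v u1 = Some #|[set u | v u < v u1]| by rewrite /xrank (negbTE vu1).
  have ltk : (#|[set u | (v u < v u1)%R]| < #|[set u | (v u < v t)%R]|)%N.
    apply: proper_card; apply/properP; split.
      by apply/fintype.subsetP => u; rewrite !inE => h; exact: (Order.POrderTheory.lt_trans h lt1).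
    by exists u1; rewrite !inE ?ltxx.
  have := @lmin_lb _ (xrank v) (Post P t a) u1; rewrite inPost => /(_ pu1).
  rewrite xu1 xt.
  case: (foldr _ _ _) => [k'|] //= hk.
  case: [exists _, _] => /=; lia.
have allEq : forall u, 0 < P t a u -> v u = v t.
  move=> u pu; apply/le_anti/andP; split; last first.
    by rewrite leNgt; apply/negP => h; apply: nB; exists u.
  rewrite leNgt; apply/negP => h.
  have : 0 < \sum_u' P t a u' * (v u' - v t).
    rewrite (bigD1 u) //=; apply: lt_le_trans (_ : P t a u * (v u - v t) <= _).
      by apply: mulr_gt0 => //; rewrite subr_gt0.
    rewrite lerDl; apply: sumr_ge0 => u' _.
    have := P0 u'; rewrite le_eqVlt => /orP [/eqP <-|pu']; first by rewrite mul0r.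
    apply: mulr_ge0 => //; rewrite subr_ge0 leNgt; apply/negP => h'.
    by apply: nB; exists u'.
  rewrite (eq_bigr (fun u' => P t a u' * v u' - P t a u' * v t)); last first.
    by move=> u' _; rewrite mulrBr.
  by rewrite sumrB -mulr_suml sum1 mul1r subr_gt0 ltNge hB.
have [u0 pu0] : exists u, 0 < P t a u.
  apply: contrapT => hn.
  have : \sum_u P t a u = 0.
    apply: big1 => u _; apply/eqP; rewrite eq_le P0 andbT leNgt; apply/negP => h.
    by apply: hn; exists u.
  by rewrite sum1 => /eqP; rewrite oner_eq0.
have xeq : forall u, 0 < P t a u -> xrank v u = xrank v t.
  by move=> u pu; rewrite /xrank allEq.
have -> : [exists u, exists w, [&& 0 < P t a u, 0 < P t a w & xrank v u != xrank v w]] = false.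
  apply/negbTE/negP => /existsP [u /existsP [w /and3P [pu pw]]].
  by rewrite xeq // xeq // eqxx.
case: (lmin_att (xrank v) (Post P t a)) => [e|[y yin ->]].
  have := @lmin_lb _ (xrank v) (Post P t a) u0; rewrite inPost => /(_ pu0).
  by rewrite e xeq // xt.
rewrite inPost in yin; rewrite xeq // xt /=; lia.
Qed.

End PartF.

Local Open Scope ring_scope.
Local Open Scope ring_scope.

Theorem lemma11 (R : realType) (S A : finType) (P : S -> A -> S -> R)
  (T : {set S}) (opt : optT) (r : S -> ninf) (sigma : S -> A) :
  is_mdp P ->
  is_lfp (Dtilde P opt T) r ->
  strategy P sigma ->
  (forall s, PrReach P sigma T s = PrOpt P opt T s) ->
  forall s : S,
    0 < PrUntil P sigma T (fun t => PrOpt P opt T t = 0) s ->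
    r s <> None.
Proof.
move=> mdp lfp st hopt s hz.
pose v := PrReach P sigma T.
have hZ : forall t, PrOpt P opt T t = 0 -> PrReach P sigma T t = 0.
  by move=> t; rewrite hopt.
have vle1 : forall u, v u <= 1 by move=> u; exact: Pr_le1.
have vs : v s != 1.
  have := Pr_until mdp s st hZ => h.
  apply/eqP => e; move: h; rewrite -/v e subrr => h.
  by move: (lt_le_trans hz h); rewrite ltxx.
have pre : npre (Dtilde P opt T) (xrank v).
  move=> t; rewrite /Dtilde.
  case: ifP => tT.
    by rewrite /xrank /v Pr_T // eqxx.
  case: (eqVneq (v t) 1) => [e|vt1].
    have -> : xrank v t = None by rewrite /xrank e eqxx.
    exact: nle_None.
  destruct opt; rewrite /=.
    apply: nle_trans (foldmin_le _ (y := sigma t) _) _.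
      by rewrite mem_filter mem_enum andbT; exact: st.
    apply: key => //.
    by apply: Pr_HD => //; rewrite tT.
  apply: foldmax_lub; last by rewrite /xrank (negbTE vt1).
  move=> a; rewrite mem_filter mem_enum andbT => en.
  apply: key => //; apply: bellman => //; last by rewrite tT.
  move=> tau stau; rewrite /v hopt /PrOpt.
  apply: sup_upper_bound; last by exists tau.
  split; first by exists (PrReach P sigma T t); exists sigma.
  by exists 1 => _ [tau' [st' ->]]; exact: Pr_le1.
have := lfp_below_pre (Dtilde_mono P opt T) lfp pre s.
rewrite /xrank (negbTE vs).
by case: (r s).
Qed.
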